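(* Let $\mathcal{A}\subset\mathscr{P}(\mathbb{N}_0)$ be a Furstenberg family and let $f:X\to X$ be a continuous map on a metric space $(X,d)$. The following are equivalent: (i) $(X,f)$ is weakly-mixing and topologically $\mathcal{A}$-transitive; (ii) $(X^N,f_{(N)})$ is topologically $\mathcal{A}$-transitive for every $N\in\mathbb{N}$; (iii) $(\mathcal{K}(X),\overline{f})$ is topologically $\mathcal{A}$-transitive; (iv) $(\mathcal{F}_\infty(X),\hat f)$ is topologically $\mathcal{A}$-transitive; (v) $(\mathcal{F}_0(X),\hat f)$ is topologically $\mathcal{A}$-transitive; (vi) $(\mathcal{F}_S(X),\hat f)$ is topologically $\mathcal{A}$-transitive; (vii) $(\mathcal{F}_E(X),\hat f)$ is topologically $\mathcal{A}$-transitive.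
   Context: $\mathbb{N}=\{1,2,\dots\}$, $\mathbb{N}_0=\mathbb{N}\cup\{0\}$, $\mathbb{I}=[0,1]$. A Furstenberg family is a collection $\mathcal{A}\subset\mathscr{P}(\mathbb{N}_0)$ with $\varnothing\notin\mathcal{A}$ that is upward hereditary ($A\in\mathcal{A}$, $A\subset B\subset\mathbb{N}_0$ implies $B\in\mathcal{A}$). For a continuous map $g$ on a topological space $Y$ and $U,V\subset Y$, $\mathcal{N}_g(U,V)=\{n\in\mathbb{N}_0: g^n(U)\cap V\neq\varnothing\}$; $(Y,g)$ is topologically $\mathcal{A}$-transitive if $\mathcal{N}_g(U,V)\in\mathcal{A}$ for all non-empty open $U,V\subset Y$; topologically transitive if $\mathcal{N}_g(U,V)\cap\mathbb{N}\neq\varnothing$ for all such $U,V$; weakly-mixing if $(Y\times Y,g\times g)$ is topologically transitive. $f_{(N)}=f\times\cdots\times f$ ($N$ times) acts on $X^N$ with the product topology. Fuzzy setting: for $u:X\to\mathbb{I}$, $u_\alpha=\{x: u(x)\ge\alpha\}$ for $\alpha\in]0,1]$ and $u_0=\overline{\{x:u(x)>0\}}$. $\mathcal{F}(X)$ is the set of upper-semicontinuous $u:X\to\mathbb{I}$ with $u_0$ compact and $u_1\neq\varnothing$. $\mathcal{K}(X)$ is the set of non-empty compact subsets of $X$ with the Hausdorff metric $d_H(A,B)=\max\{\sup_{a\in A}d(a,B),\sup_{b\in B}d(b,A)\}$, and $\overline f(K)=f(K)$. The Zadeh extension is $\hat f(u)(x)=\sup\{u(y): f(y)=x\}$ if $f^{-1}(\{x\})\ne\varnothing$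 and $0$ otherwise. Metrics on $\mathcal{F}(X)$: supremum metric $d_\infty(u,v)=\sup_{\alpha\in\mathbb{I}}d_H(u_\alpha,v_\alpha)$; Skorokhod metric $d_0(u,v)=\inf\{\varepsilon>0:\exists\xi\in\mathcal{T}$ with $\sup_{\alpha}|\xi(\alpha)-\alpha|\le\varepsilon$ and $d_\infty(u,\xi\circ v)\le\varepsilon\}$, where $\mathcal{T}$ is the set of strictly increasing homeomorphisms of $\mathbb{I}$; with $\overline d((x,\alpha),(y,\beta))=\max\{d(x,y),|\alpha-\beta|\}$ on $X\times\mathbb{I}$, $\operatorname{end}(u)=\{(x,\alpha)\in X\times\mathbb{I}:u(x)\ge\alpha\}$ and $\operatorname{send}(u)=\operatorname{end}(u)\cap(u_0\times\mathbb{I})$, the endograph metric $d_E(u,v)$ and sendograph metric $d_S(u,v)$ are the $\overline d$-Hausdorff distances between the endographs, respectively sendographs. $\mathcal{F}_\infty(X),\mathcal{F}_0(X),\mathcal{F}_S(X),\mathcal{F}_E(X)$ denote $\mathcal{F}(X)$ with $d_\infty,d_0,d_S,d_E$. *)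

(* Defs.v *)
From mathcomp Require Import all_boot all_order all_algebra.
From mathcomp Require Import all_classical all_reals.
From mathcomp Require Export Rstruct.
Set Implicit Arguments. Unset Strict Implicit. Unset Printing Implicit Defensive.
Import Order.TTheory GRing.Theory Num.Theory.
Local Open Scope classical_set_scope.
Local Open Scope ring_scope.

Section Defs.
Variable R : realType.

Definition Furstenberg_family (A : set (set nat)) : Prop :=
  ~ A set0 /\ (forall B C : set nat, A B -> B `<=` C -> A C).

Definition is_metric {X : Type} (d : X -> X -> R) : Prop :=
  [/\ forall x y, 0 <= d x y, forall x y, d x y = 0 <-> x = y,
      forall x y, d x y = d y x & forall x y z, d x z <= d x y + d y z].

Definition mcontinuous {X : Type} (d : X -> X -> R) (f : X -> X) : Prop :=
  forall x e, 0 < e -> exists2 dl, 0 < dl & forall y, d x y < dl -> d (f x) (f y) < e.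

Definition mopen {T : Type} (D : T -> T -> R) (U : set T) : Prop :=
  forall x, U x -> exists2 e, 0 < e & forall y, D x y < e -> U y.

Definition sub_open {T : Type} (P : set T) (D : T -> T -> R) (U : set T) : Prop :=
  U `<=` P /\ forall x, U x -> exists2 e, 0 < e & forall y, P y -> D x y < e -> U y.

Definition prod_open {X : Type} (d : X -> X -> R) (N : nat) (W : set ('I_N -> X)) : Prop :=
  forall x, W x -> exists2 e, 0 < e & forall y, (forall i, d (x i) (y i) < e) -> W y.

Definition pair_open {X : Type} (d : X -> X -> R) (W : set (X * X)) : Prop :=
  forall p, W p -> exists2 e, 0 < e &
    forall q, d p.1 q.1 < e -> d p.2 q.2 < e -> W q.

Definition prodmap {X : Type} (f : X -> X) (N : nat) : ('I_N -> X) -> ('I_N -> X) :=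
  fun x i => f (x i).

Definition Nset {T : Type} (g : T -> T) (U V : set T) : set nat :=
  [set n | exists2 x, U x & V (iter n g x)].

Definition A_transitive {T : Type} (opn : set T -> Prop) (g : T -> T)
  (A : set (set nat)) : Prop :=
  forall U V, opn U -> opn V -> U !=set0 -> V !=set0 -> A (Nset g U V).

Definition top_transitive {T : Type} (opn : set T -> Prop) (g : T -> T) : Prop :=
  forall U V, opn U -> opn V -> U !=set0 -> V !=set0 ->
    exists n, (0 < n)%N /\ Nset g U V n.

Definition weakly_mixing {X : Type} (d : X -> X -> R) (f : X -> X) : Prop :=
  top_transitive (pair_open d) (fun p => (f p.1, f p.2)).

Definition mcompact {X : Type} (d : X -> X -> R) (K : set X) : Prop :=
  forall (I : Type) (G : I -> set X), (forall i, mopen d (G i)) ->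
    (forall x, K x -> exists i, G i x) ->
    exists (n : nat) (h : 'I_n -> I), forall x, K x -> exists j, G (h j) x.

Definition Kspace {X : Type} (d : X -> X -> R) (K : set X) : Prop :=
  K !=set0 /\ mcompact d K.

Definition dist_set {T : Type} (D : T -> T -> R) (x : T) (B : set T) : R :=
  inf [set D x b | b in B].

Definition hausdorff {T : Type} (D : T -> T -> R) (A B : set T) : R :=
  Num.max (sup [set dist_set D a B | a in A]) (sup [set dist_set D b A | b in B]).

Definition I01 (a : R) : Prop := 0 <= a <= 1.

Definition mclosure {X : Type} (d : X -> X -> R) (S : set X) : set X :=
  [set x | forall e, 0 < e -> exists2 y, S y & d x y < e].

Definition level {X : Type} (d : X -> X -> R) (u : X -> R) (a : R) : set X :=
  if a == 0 then mclosure d [set x | 0 < u x] else [set x | a <= u x].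

Definition usc {X : Type} (d : X -> X -> R) (u : X -> R) : Prop :=
  forall x t, u x < t -> exists2 e, 0 < e & forall y, d x y < e -> u y < t.

Definition fuzzy {X : Type} (d : X -> X -> R) (u : X -> R) : Prop :=
  [/\ forall x, I01 (u x), usc d u, mcompact d (level d u 0)
    & level d u 1 !=set0].

Definition zadeh {X : Type} (f : X -> X) (u : X -> R) : X -> R :=
  fun x => if `[< exists y, f y = x >] then sup [set u y | y in f @^-1` [set x]]
           else 0.

Definition d_inf {X : Type} (d : X -> X -> R) (u v : X -> R) : R :=
  sup [set hausdorff d (level d u a) (level d v a) | a in I01].

Definition incr_homeo (xi : R -> R) : Prop :=
  [/\ forall a b, I01 a -> I01 b -> a < b -> xi a < xi b,
      forall a, I01 a -> I01 (xi a),
      forall b, I01 b -> exists2 a, I01 a & xi a = b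
    & forall a, I01 a -> forall e, 0 < e -> exists2 dl, 0 < dl &
        forall b, I01 b -> `|a - b| < dl -> `|xi a - xi b| < e].

Definition d_0 {X : Type} (d : X -> X -> R) (u v : X -> R) : R :=
  inf [set e | 0 < e /\ exists xi, [/\ incr_homeo xi,
          sup [set `|xi a - a| | a in I01] <= e
        & d_inf d u (xi \o v) <= e]].

Definition dbar {X : Type} (d : X -> X -> R) (p q : X * R) : R :=
  Num.max (d p.1 q.1) `|p.2 - q.2|.

Definition endg {X : Type} (u : X -> R) : set (X * R) :=
  [set p | I01 p.2 /\ p.2 <= u p.1].

Definition sendg {X : Type} (d : X -> X -> R) (u : X -> R) : set (X * R) :=
  endg u `&` [set p | level d u 0 p.1].

Definition d_E {X : Type} (d : X -> X -> R) (u v : X -> R) : R :=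
  hausdorff (dbar d) (endg u) (endg v).

Definition d_S {X : Type} (d : X -> X -> R) (u v : X -> R) : R :=
  hausdorff (dbar d) (sendg d u) (sendg d v).

End Defs.

Arguments prod_open {R X} d N W.
Arguments prodmap {X} f N x i.

(* Main.v *)
Require Import Defs.
From mathcomp Require Import all_boot all_order all_algebra.
From mathcomp Require Import all_classical all_reals Rstruct.
From mathcomp Require Import lra.
Unset Printing Implicit Defensive.
Import Order.TTheory GRing.Theory Num.Theory.
Local Open Scope classical_set_scope.
Local Open Scope ring_scope.

Section Reals.
Context {R : realType}.

Lemma lemaxL (x y : R) : x <= Num.max x y. Proof. by rewrite le_max lexx. Qed.
Lemma lemaxR (x y : R) : y <= Num.max x y. Proof. by rewrite le_max lexx orbT. Qed.
Lemma leminL (x y : R) : Num.min x y <= x. Proof. by rewrite ge_min lexx. Qed.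
Lemma leminR (x y : R) : Num.min x y <= y. Proof. by rewrite ge_min lexx orbT. Qed.

Lemma mx_r (x y : R) : x <= y -> Num.max x y = y.
Proof. by move=> h; apply/eqP; rewrite eq_le ge_max h lexx lemaxR. Qed.
Lemma mx_l (x y : R) : y <= x -> Num.max x y = x.
Proof. by move=> h; apply/eqP; rewrite eq_le ge_max h lexx lemaxL. Qed.

Lemma supLE (S : set R) M : (forall x, S x -> x <= M) -> 0 <= M -> sup S <= M.
Proof.
move=> H M0; case: (pselect (S !=set0)) => [ne|e].
  by apply: ge_sup.
have -> : S = set0 by apply/seteqP; split => // x Sx; apply: e; exists x.
by rewrite sup0.
Qed.

Lemma le_supP (S : set R) x M : (forall y, S y -> y <= M) -> S x -> x <= sup S.
Proof. by move=> H Sx; apply: ub_le_sup => //; exists M. Qed.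

Lemma inf_le_elt (S : set R) x : (forall y, S y -> 0 <= y) -> S x -> inf S <= x.
Proof. by move=> H Sx; apply: ge_inf => //; exists 0. Qed.

Lemma sup_eq_max (S : set R) m : S m -> (forall y, S y -> y <= m) -> sup S = m.
Proof.
move=> Sm H; apply/eqP; rewrite eq_le; apply/andP; split.
  by apply: ge_sup => //; exists m.
exact: (le_supP _ _ _ H).
Qed.

Variable T : Type.
Variable D : T -> T -> R.
Hypothesis D0 : forall p q, 0 <= D p q.

Lemma DS1 p (Q : set T) q : Q q -> dist_set D p Q <= D p q.
Proof.
move=> Qq; apply: inf_le_elt; last by exists q.
by move=> _ [b _ <-].
Qed.

Lemma DS0 p (Q : set T) : 0 <= dist_set D p Q.
Proof.
rewrite /dist_set; case: (pselect (Q !=set0)) => [[q Qq]|e].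
  by apply: lb_le_inf; [exists (D p q); exists q|move=> _ [b _ <-]].
have -> : [set D p b | b in Q] = set0.
  by apply/seteqP; split => // x [b Qb eb]; apply: e; exists b.
by rewrite inf0.
Qed.

Lemma DS2 p (Q : set T) r : dist_set D p Q < r -> Q !=set0 -> exists q, Q q /\ D p q < r.
Proof.
move=> h [q Qq].
have ne : [set D p b | b in Q] !=set0 by exists (D p q); exists q.
have [y [b Qb eb] lt] := inf_lt ne h.
by exists b; rewrite eb.
Qed.

Lemma HUB (P Q : set T) r : 0 <= r ->
  (forall p, P p -> exists q, Q q /\ D p q <= r) ->
  (forall q, Q q -> exists p, P p /\ D q p <= r) -> hausdorff D P Q <= r.
Proof.
move=> r0 H1 H2; rewrite /hausdorff ge_max; apply/andP; split; apply: supLE => // _ [x Px <-].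
  by have [q [Qq le]] := H1 _ Px; apply: le_trans le; apply: DS1.
by have [q [Qq le]] := H2 _ Px; apply: le_trans le; apply: DS1.
Qed.

Lemma HLB1 (P Q : set T) r M a :
  (forall p, P p -> exists q, Q q /\ D p q <= M) ->
  hausdorff D P Q < r -> P a -> exists b, Q b /\ D a b < r.
Proof.
move=> HM h Pa.
have [q [Qq _]] := HM _ Pa.
apply: DS2; last by exists q.
apply: le_lt_trans h; apply: le_trans (lemaxL _ _ ).
apply: (le_supP _ _ M); last by exists a.
move=> _ [p Pp <-]; have [q' [Qq' le]] := HM _ Pp; exact: le_trans (DS1 _ _ _ Qq') le.
Qed.

Lemma HLB2 (P Q : set T) r M b :
  (forall q, Q q -> exists p, P p /\ D q p <= M) ->
  hausdorff D P Q < r -> Q b -> exists a, P a /\ D b a < r.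
Proof.
move=> HM h Qb.
have [q [Qq _]] := HM _ Qb.
apply: DS2; last by exists q.
apply: le_lt_trans h; apply: le_trans (lemaxR _ _ ).
apply: (le_supP _ _ M); last by exists b.
move=> _ [p Pp <-]; have [q' [Qq' le]] := HM _ Pp; exact: le_trans (DS1 _ _ _ Qq') le.
Qed.

End Reals.

Section FM.
Context {R : realType} {I : eqType}.
Definition FM (s : seq I) (g : I -> R) := foldr (fun j m => Num.max (g j) m) 0 s.

Lemma FM_ge0 s g : 0 <= FM s g.
Proof. elim: s => [|a s IH] /=; [exact: lexx| exact: le_trans IH (lemaxR _ _)]. Qed.

Lemma FM_ge s g j : j \in s -> g j <= FM s g.
Proof.
elim: s => [|a s IH] //=; rewrite inE => /orP [/eqP ->|js]; first exact: lemaxL.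
exact: le_trans (IH js) (lemaxR _ _).
Qed.

Lemma FM_le s g M : (forall j, j \in s -> g j <= M) -> 0 <= M -> FM s g <= M.
Proof.
elim: s => [|a s IH] H M0 //=; rewrite ge_max H ?inE ?eqxx //= IH // => j js.
by apply: H; rewrite inE js orbT.
Qed.

Lemma FM_att s g : FM s g = 0 \/ exists2 j, j \in s & FM s g = g j.
Proof.
rewrite /FM; elim: s => [|a s [IH|[j js IH]]] /=; first by left.
- rewrite IH; case: (leP (g a) 0) => h; [by left|].
  by right; exists a; rewrite ?inE ?eqxx.
- rewrite IH; case: (leP (g a) (g j)) => h.
    by right; exists j; rewrite // inE js orbT.
  by right; exists a; rewrite ?inE ?eqxx.
Qed.
End FM.

Section Fin.
Context {R : realType}.

Lemma FINUB (I : eqType) (s : seq I) (g : I -> R) c b : b < c ->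
  exists T, [/\ T < c, b <= T & forall j, j \in s -> g j < c -> g j <= T].
Proof.
move=> bc; elim: s => [|a s [T [Tc bT HT]]].
  by exists b; split.
case: (ltP (g a) c) => ga.
  exists (Num.max T (g a)); split.
  - by rewrite gt_max Tc ga.
  - exact: le_trans bT (lemaxL _ _).
  - move=> j; rewrite inE => /orP [/eqP -> _|js gj]; first exact: lemaxR.
    exact: le_trans (HT _ js gj) (lemaxL _ _).
exists T; split => // j; rewrite inE => /orP [/eqP -> gj|js gj]; last exact: HT.
by move: (lt_le_trans gj ga); rewrite ltxx.
Qed.

Lemma FINLB (I : eqType) (s : seq I) (g : I -> R) :
  exists2 e, 0 < e & forall j, j \in s -> 0 < g j -> e <= g j.
Proof.
elim: s => [|a s [e e0 He]]; first by exists 1.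
case: (ltP 0 (g a)) => ga.
  exists (Num.min e (g a)); first by rewrite lt_min e0 ga.
  move=> j; rewrite inE => /orP [/eqP -> _|js gj]; first exact: leminR.
  exact: le_trans (leminL _ _) (He _ js gj).
exists e => // j; rewrite inE => /orP [/eqP -> gj|js gj]; last exact: He.
by move: (lt_le_trans gj ga); rewrite ltxx.
Qed.

End Fin.

Section Metric.
Context {R : realType} {X : Type} (d : X -> X -> R).
Hypothesis dm : is_metric d.

Lemma dpos x y : 0 <= d x y. Proof. by case: dm. Qed.
Lemma dxx x : d x x = 0. Proof. by case: dm => _ h _ _; apply: (proj2 (h x x)). Qed.
Lemma dsym x y : d x y = d y x. Proof. by case: dm. Qed.
Lemma dtri x y z : d x z <= d x y + d y z. Proof. by case: dm. Qed.
Lemma deq0 x y : d x y = 0 -> x = y. Proof. by case: dm => _ h _ _; apply: (proj1 (h x y)). Qed.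

Lemma dtri_lt x y z a b : d x y < a -> d y z < b -> d x z < a + b.
Proof. move=> h1 h2; apply: le_lt_trans (dtri x y z) _; exact: ltrD. Qed.

Lemma ball_open x r : mopen d [set y | d x y < r].
Proof.
move=> y /= h; exists (r - d x y); first by rewrite subr_gt0.
move=> z hz /=; have := dtri x y z; lra.
Qed.

Lemma ball_center x r : 0 < r -> d x x < r.
Proof. by rewrite dxx. Qed.

Lemma CNET (K : set X) rho : mcompact d K -> 0 < rho ->
  exists N (x : 'I_N -> X), (forall j, K (x j)) /\
    forall a, K a -> exists j, d a (x j) < rho.
Proof.
move=> cK r0.
have [n [h Hh]] := cK {a : X | K a} (fun i => [set y | d (proj1_sig i) y < rho])
  (fun i => ball_open _ _) (fun a Ka => ex_intro _ (exist _ a Ka) (ball_center _ _ r0)).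
exists n, (fun j => proj1_sig (h j)); split; first by move=> j; case: (h j).
by move=> a Ka; have [j Hj] := Hh a Ka; exists j; rewrite dsym.
Qed.

Lemma CB (K : set X) x0 : mcompact d K -> exists M : R, forall a, K a -> d x0 a <= M.
Proof.
move=> cK.
have [n [h Hh]] := cK nat (fun i => [set y | d x0 y < i%:R])
  (fun i => ball_open _ _) (fun a Ka => ex_intro (fun i : nat => d x0 a < i%:R) _ (archi_boundP (dpos x0 a))).
exists (\max_(j < n) h j)%N%:R => a Ka; have [j /= Hj] := Hh a Ka.
apply: ltW; apply: lt_le_trans Hj _; rewrite ler_nat.
exact: (leq_bigmax j).
Qed.


Lemma CMAX (C : set X) (u : X -> R) x rho : mcompact d C -> usc d u ->
  (forall y, 0 < u y -> C y) -> (forall y, 0 <= u y <= 1) -> 0 <= rho ->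
  exists s, d x s <= rho /\ forall y, d x y <= rho -> u y <= u s.
Proof.
move=> cC uu Csupp u01 r0.
case: (pselect (exists s, d x s <= rho /\ forall y, d x y <= rho -> u y <= u s)) => // nH.
pose S := [set u y | y in [set y | d x y <= rho]].
have Sub : forall y, S y -> y <= 1 by move=> _ [y _ <-]; case/andP: (u01 y).
have A : forall s, d x s <= rho -> u s < sup S.
  move=> s hs; have le : u s <= sup S by apply: (le_supP _ _ 1 Sub); exists s.
  rewrite lt_neqAle le andbT; apply/negP => /eqP E; apply: nH; exists s; split => // y hy.
  by rewrite E; apply: (le_supP _ _ 1 Sub); exists y.
set c := sup S in A.
have c0 : 0 < c by apply: le_lt_trans (A x _); [case/andP: (u01 x)|rewrite dxx].
pose G := fun o : option R => match o with
  | None => [set y | rho < d x y] | Some t => [set y | u y < t /\ t < c] end.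
have Gopen : forall o, mopen d (G o).
  case=> [t|] y /=.
    case=> uy tc; have [e e0 He] := uu y t uy; exists e => // z hz; split => //; exact: He.
  move=> hy; exists (d x y - rho); first by rewrite subr_gt0.
  move=> z hz; have := dtri x z y; rewrite (dsym z y); lra.
have Gcov : forall y, C y -> exists o, G o y.
  move=> y _; case: (ltP rho (d x y)) => hy; first by exists None.
  by exists (Some ((u y + c) / 2)) => /=; have := A y hy; split; lra.
have [n [h Hh]] := cC _ G Gopen Gcov.
pose g := fun j => match h j with Some t => t | None => 0 end.
have [T [Tc T0 HT]] := FINUB _ (enum 'I_n) g c 0 c0.
have : c <= T.
  apply: supLE => // _ [y hy <-]; case: (ltP 0 (u y)) => uy0; last exact: le_trans uy0 T0.
  have [j Hj] := Hh y (Csupp y uy0).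
  have := HT j; rewrite mem_enum /g; case E: (h j) => [t|]; rewrite E /= in Hj.
    by case: Hj => uyt tc /(_ isT tc) tT; apply: ltW; apply: lt_le_trans uyt tT.
  by move: (le_lt_trans hy Hj); rewrite ltxx.
by rewrite leNgt Tc.
Qed.


Definition W N (z : 'I_N -> X) (c : 'I_N -> R) (y : X) : R :=
  FM (enum 'I_N) (fun j => if `[< z j = y >] then c j else 0).
Arguments W {N} z c y.

Lemma FINCOMP N (z : 'I_N -> X) (K : set X) : (exists y, K y) ->
  (forall y, K y -> exists j, y = z j) -> mcompact d K.
Proof.
move=> [y0 Ky0] HK I G _ cov.
have [i0 _] := cov y0 Ky0.
have : forall j : 'I_N, exists i, K (z j) -> G i (z j).
  move=> j; case: (pselect (K (z j))) => h; last by exists i0.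
  by have [i Hi] := cov _ h; exists i.
move=> /choice [h Hh]; exists N, h => x Kx.
have [j ej] := HK x Kx; exists j; rewrite ej; apply: Hh; by rewrite -ej.
Qed.

Section WProps.
Variables (N : nat) (z : 'I_N -> X) (c : 'I_N -> R).
Hypothesis c01 : forall j, 0 <= c j <= 1.

Lemma Wge0 y : 0 <= W z c y. Proof. exact: FM_ge0. Qed.

Lemma Wle y M : (forall j, z j = y -> c j <= M) -> 0 <= M -> W z c y <= M.
Proof.
move=> H M0; apply: FM_le => // j _.
by case: (pselect (z j = y)) => h; [rewrite asboolT //; apply: H|rewrite asboolF].
Qed.

Lemma Wle1 y : W z c y <= 1.
Proof. by apply: Wle => // j _; case/andP: (c01 j). Qed.

Lemma Wge j : c j <= W z c (z j).
Proof.
have := FM_ge (enum 'I_N) (fun i => if `[< z i = z j >] then c i else 0) j.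
by rewrite mem_enum asboolT //; apply.
Qed.

Lemma Wpos y : 0 < W z c y -> exists j, z j = y /\ W z c y = c j.
Proof.
rewrite /W; case: (FM_att (enum 'I_N) (fun j => if `[< z j = y >] then c j else 0)) => [->|[j _ ->]].
  by rewrite ltxx.
by case: (pselect (z j = y)) => h; [rewrite asboolT //; exists j|rewrite asboolF // ltxx].
Qed.

Lemma Wzero y : (forall j, z j <> y) -> W z c y = 0.
Proof.
move=> H; apply/eqP; rewrite eq_le Wge0 andbT; apply: Wle => // j /H //.
Qed.

Lemma Wnear y : exists2 e, 0 < e & forall y', d y y' < e -> y' = y \/ W z c y' = 0.
Proof.
have [e e0 He] := FINLB _ (enum 'I_N) (fun j => d y (z j)).
exists e => // y' hy'; case: (pselect (y' = y)) => h; [by left|right].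
apply: Wzero => j ej; apply: h; rewrite -ej; apply: esym; apply: deq0.
have := He j; rewrite mem_enum ej => /(_ isT) H.
apply/eqP; rewrite eq_le dpos andbT leNgt; apply/negP => /H.
by rewrite leNgt hy'.
Qed.

Lemma Wusc : usc d (W z c).
Proof.
move=> y t ht; have [e e0 He] := Wnear y; exists e => // y' /He [->|->] //.
exact: le_lt_trans (Wge0 y) ht.
Qed.

Lemma Wclos y : mclosure d [set x | 0 < W z c x] y -> exists j, y = z j.
Proof.
move=> H; have [e e0 He] := Wnear y; have [y' hy' dy'] := H e e0.
have [j [ej _]] := Wpos _ hy'; exists j.
case: (He y' dy') => [ey|E]; first by rewrite ej ey.
by move: hy' => /=; rewrite E ltxx.
Qed.

Lemma Wfuzzy : (exists j, c j = 1) -> fuzzy d (W z c).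
Proof.
move=> [j1 cj1]; split.
- by move=> y; rewrite /I01 Wge0 Wle1.
- exact: Wusc.
- rewrite /level eqxx; apply: (FINCOMP _ z).
    exists (z j1) => e e0; exists (z j1); last by rewrite dxx.
    by rewrite /=; apply: lt_le_trans (Wge j1); rewrite cj1.
  exact: Wclos.
- by exists (z j1); rewrite /level oner_eq0 /= -cj1; apply: Wge.
Qed.

End WProps.


Variable f : X -> X.
Hypothesis fc : mcontinuous d f.

Lemma zadehW N (z : 'I_N -> X) c : (forall j, 0 <= c j <= 1) ->
  zadeh f (W z c) = W (fun j => f (z j)) c.
Proof.
move=> c01; apply: funext => y; rewrite /zadeh.
case: (pselect (exists y0, f y0 = y)) => [[y0 fy0]|nex]; last first.
  rewrite asboolF // Wzero // => j ej; apply: nex; by exists (z j).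
rewrite asboolT; last by exists y0.
have ub : forall a, f a = y -> W z c a <= W (fun j => f (z j)) c y.
  move=> a fa; apply: Wle => //; last exact: Wge0.
  by move=> j ej; have := Wge _ (fun j => f (z j)) c j; rewrite /= ej fa.
apply: sup_eq_max; last by move=> _ [a fa <-]; apply: ub.
case: (ltP 0 (W (fun j => f (z j)) c y)) => h.
  have [j [ej E]] := Wpos _ _ _ _ h.
  exists (z j); first exact: ej.
  apply/eqP; rewrite eq_le ub // E Wge //.
exists y0 => //; apply/eqP; rewrite eq_le ub //=.
exact: le_trans h (Wge0 _ _ _ _).
Qed.

Lemma iter_zadehW N (z : 'I_N -> X) c n : (forall j, 0 <= c j <= 1) ->
  iter n (zadeh f) (W z c) = W (fun j => iter n f (z j)) c.
Proof.
move=> c01; elim: n => [//|n IH]; by rewrite iterS IH zadehW.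
Qed.

Lemma ZI n (u : X -> R) b (t : R) : 0 <= t -> t < iter n (zadeh f) u b -> exists a, iter n f a = b /\ t < u a.
Proof.
move=> t0; elim: n b => [|n IH] b /=; first by exists b.
rewrite /zadeh; case: (pselect (exists y0, f y0 = b)) => [ex|nex]; last first.
  by rewrite asboolF // => /(le_lt_trans t0); rewrite ltxx.
rewrite asboolT // => /sup_gt [].
  by case: ex => y0 fy0; exists (iter n (zadeh f) u y0); exists y0.
move=> _ [y fy <-] /IH [a [ea ta]]; exists a; split => //.
by rewrite ea.
Qed.

Lemma iter_prodmap N n (x : 'I_N -> X) : iter n (prodmap f N) x = fun i => iter n f (x i).
Proof. by elim: n => [//|n IH]; rewrite iterS IH. Qed.

Lemma iter_pair n (p : X * X) : iter n (fun p => (f p.1, f p.2)) p = (iter n f p.1, iter n f p.2).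
Proof. by elim: n => [|n IH]; [case: p|rewrite iterS IH]. Qed.

Lemma iter_image n (K : set X) : iter n (fun K => f @` K) K = [set iter n f a | a in K].
Proof.
elim: n => [|n IH] /=.
  by apply/seteqP; split => [a Ka|_ [a Ka <-]] //; exists a.
rewrite IH; apply/seteqP; split => [_ [_ [a Ka <-] <-]|_ [a Ka <-]]; first by exists a.
by exists (iter n f a) => //; exists a.
Qed.

Lemma preim_open U : mopen d U -> mopen d [set x | U (f x)].
Proof.
move=> oU x /= Ux; have [e e0 He] := oU _ Ux; have [dl dl0 Hdl] := fc x e e0.
by exists dl => // y /Hdl /He.
Qed.

Lemma preim_iter_open k U : mopen d U -> mopen d [set x | U (iter k f x)].
Proof.
elim: k U => [//|k IH] U oU.
have -> : [set x | U (iter k.+1 f x)] = [set x | [set y | U (f y)] (iter k f x)] by [].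
exact/IH/preim_open.
Qed.

Lemma mopenI U V : mopen d U -> mopen d V -> mopen d (U `&` V).
Proof.
move=> oU oV x [Ux Vx]; have [e1 e10 H1] := oU x Ux; have [e2 e20 H2] := oV x Vx.
exists (Num.min e1 e2); first by rewrite lt_min e10 e20.
move=> y hy; split; [apply: H1|apply: H2]; apply: lt_le_trans hy _;
  [exact: leminL|exact: leminR].
Qed.

Lemma mopenT : mopen d setT.
Proof. by move=> x _; exists 1. Qed.

Lemma pair_rect U V : mopen d U -> mopen d V -> pair_open d [set p | U p.1 /\ V p.2].
Proof.
move=> oU oV p [Up Vp]; have [e1 e10 H1] := oU _ Up; have [e2 e20 H2] := oV _ Vp.
exists (Num.min e1 e2); first by rewrite lt_min e10 e20.
move=> q h1 h2; split; [apply: H1; apply: lt_le_trans h1 _|apply: H2; apply: lt_le_trans h2 _];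
  [exact: leminL|exact: leminR].
Qed.

Lemma ffam_ne (A : set (set nat)) S : Furstenberg_family A -> A S -> S !=set0.
Proof.
move=> [A0 _] AS; case: (pselect (S !=set0)) => // h; exfalso; apply: A0.
suff -> : set0 = S by [].
by apply/seteqP; split => // n Sn; apply: h; exists n.
Qed.

Definition Ttrans := forall U V, mopen d U -> mopen d V -> U !=set0 -> V !=set0 ->
  exists n, Nset f U V n.

Lemma preim_nonempty : Ttrans -> forall V, mopen d V -> V !=set0 -> exists x, V (f x).
Proof.
move=> T V oV [p Vp]; case: (pselect (exists x, V (f x))) => // H; exfalso.
have [r r0 Hr] := oV p Vp.
have stA : forall q, d p q < r -> q = p.
  move=> q hq; case: (pselect (q = p)) => // nqp; exfalso.
  have s0 : 0 < d p q.
    rewrite lt_neqAle dpos andbT; apply/negP => /eqP E; apply: nqp; apply: esym; exact: deq0.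
  set s := d p q in s0 hq.
  pose t := Num.min (s / 2) (r - s).
  have t1 : t <= s / 2 by exact: leminL.
  have t2 : t <= r - s by exact: leminR.
  have t0 : 0 < t.
    rewrite lt_min; apply/andP; split; [have : 0 < s / 2 by lra|have : 0 < r - s by lra]; done.
  have s20 : 0 < s / 2 by lra.
  have [n [x hx hn]] := T [set y | d p y < s / 2] [set y | d q y < t] (ball_open _ _) (ball_open _ _)
    (ex_intro _ p (ball_center _ _ s20)) (ex_intro _ q (ball_center _ _ t0)).
  move: hx hn => /= hx; case: n => [|k] /= hn.
    have := dtri p x q; rewrite (dsym x q) -/s; lra.
  apply: H; exists (iter k f x); apply: Hr.
  have := dtri p q (f (iter k f x)); rewrite -/s; lra.
have stB : forall x, x = p.
  move=> x; case: (pselect (x = p)) => // nxp; exfalso.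
  have e0 : 0 < d x p.
    rewrite lt_neqAle dpos andbT; apply/negP => /eqP E; apply: nxp; exact: deq0.
  have [n [y hy hn]] := T [set y | d x y < d x p] [set y | d p y < r] (ball_open _ _) (ball_open _ _)
    (ex_intro _ x (ball_center _ _ e0)) (ex_intro _ p (ball_center _ _ r0)).
  move: hy hn => /= hy; case: n => [|k] /= hn.
    by move: hy; rewrite (stA _ hn) ltxx.
  by apply: H; exists (iter k f y); apply: Hr.
by apply: H; exists p; rewrite (stB (f p)).
Qed.

Lemma preim_iter_nonempty : Ttrans -> forall k V, mopen d V -> V !=set0 ->
  exists x, V (iter k f x).
Proof.
move=> T; elim=> [|k IH] V oV nV; first by case: nV => x Vx; exists x.
have [x Hx] := IH [set y | V (f y)] (preim_open _ oV) (preim_nonempty T _ oV nV).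
by exists x.
Qed.

Lemma ball_ne x r : 0 < r -> [set y | d x y < r] !=set0.
Proof. by move=> r0; exists x; rewrite /= dxx. Qed.

Definition Qprop := forall U V Wt, mopen d U -> mopen d V -> mopen d Wt ->
  U !=set0 -> V !=set0 -> Wt !=set0 -> exists n, Nset f U V n /\ Nset f U Wt n.

Lemma Q_T : Qprop -> Ttrans.
Proof. by move=> Q U V oU oV nU nV; have [n [h _]] := Q U V V oU oV oV nU nV nV; exists n. Qed.

Lemma WM_of_Q : Qprop -> weakly_mixing d f.
Proof.
move=> Q; have T := Q_T Q.
move=> W1 W2 oW1 oW2 [p Wp] [p' Wp'].
have [e1 e10 H1] := oW1 p Wp; have [e2 e20 H2] := oW2 p' Wp'.
pose U1 := [set y | d p.1 y < e1]; pose U2 := [set y | d p.2 y < e1].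
pose V1 := [set y | d p'.1 y < e2]; pose V2 := [set y | d p'.2 y < e2].
have [k [x0 hx0 hkx0]] := T U1 U2 (ball_open _ _) (ball_open _ _)
  (ball_ne p.1 _ e10) (ball_ne p.2 _ e10).
pose U := U1 `&` [set x | U2 (iter k f x)].
have oU : mopen d U by apply: mopenI; [exact: ball_open|apply: preim_iter_open; exact: ball_open].
have oV1' : mopen d [set x | V1 (f x)] by apply: preim_open; exact: ball_open.
have oV2' : mopen d [set x | V2 (f x)] by apply: preim_open; exact: ball_open.
have nV1' := preim_nonempty T _ (ball_open _ _) (ball_ne p'.1 _ e20).
have nV2' := preim_nonempty T _ (ball_open _ _) (ball_ne p'.2 _ e20).
pose Wk := [set x | [set x | V2 (f x)] (iter k f x)].
have oWk : mopen d Wk by exact: preim_iter_open.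
have nWk : Wk !=set0 by have [x hx] := preim_iter_nonempty T k _ oV2' nV2'; exists x.
have [n [[x [xU1 xU2] hx] [x' [x'U1 x'U2] hx']]] :=
  Q U [set x | V1 (f x)] Wk oU oV1' oWk (ex_intro _ x0 (conj hx0 hkx0)) nV1' nWk.
exists n.+1; split => //; exists (x, iter k f x'); first by apply: H1.
rewrite iter_pair /=; apply: H2 => /=.
  by move: hx.
by move: hx'; rewrite /Wk /= -!iterD addnC.
Qed.

Definition PQ (A : set (set nat)) := forall U V Wt, mopen d U -> mopen d V -> mopen d Wt ->
  U !=set0 -> V !=set0 -> Wt !=set0 -> A (Nset f U V `&` Nset f U Wt).

Lemma i_of_PQ A : Furstenberg_family A -> PQ A ->
  weakly_mixing d f /\ A_transitive (mopen d) f A.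
Proof.
move=> FA P; split.
  apply: WM_of_Q => U V Wt oU oV oW nU nV nW.
  have [n [h1 h2]] := ffam_ne _ _ FA (P U V Wt oU oV oW nU nV nW); by exists n.
by move=> U V oU oV nU nV; have := P U V V oU oV oV nU nV nV; rewrite setIid.
Qed.

Lemma rect_ne (U V : set X) : U !=set0 -> V !=set0 -> [set p | U p.1 /\ V p.2] !=set0.
Proof. by move=> [u Uu] [v Vv]; exists (u, v). Qed.

Lemma FURST (I : eqType) (Uf Vf : I -> set X) : weakly_mixing d f ->
  (forall i, [/\ mopen d (Uf i), mopen d (Vf i), Uf i !=set0 & Vf i !=set0]) ->
  forall (s : seq I) (x0 : X), exists U V, [/\ mopen d U, mopen d V, U !=set0, V !=set0 &
    forall n, Nset f U V n -> forall i, i \in s -> Nset f (Uf i) (Vf i) n].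
Proof.
move=> wm HUV; elim=> [|i s IH] x0.
  exists setT, setT; split => //; [exact: mopenT|exact: mopenT|by exists x0|by exists x0].
have [U [V [oU oV nU nV HN]]] := IH x0.
have [oUi oVi nUi nVi] := HUV i.
have [k [_ [[x y] [xU yV]]]] := wm _ _ (pair_rect _ _ oU oV) (pair_rect _ _ oUi oVi)
   (rect_ne _ _ nU nV) (rect_ne _ _ nUi nVi).
rewrite iter_pair /= => -[hx hy].
exists (U `&` [set x | Uf i (iter k f x)]), (V `&` [set x | Vf i (iter k f x)]); split.
- by apply: mopenI => //; exact: preim_iter_open.
- by apply: mopenI => //; exact: preim_iter_open.
- by exists x.
- by exists y.
move=> n [a [aU aUi] [bV bVi]] j; rewrite inE => /orP [/eqP ->|js].
  exists (iter k f a) => //; move: bVi; by rewrite /= -!iterD addnC.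
by apply: HN => //; exists a.
Qed.

Lemma i_to_ii A : Furstenberg_family A ->
  weakly_mixing d f /\ A_transitive (mopen d) f A ->
  forall N : nat, (0 < N)%N -> A_transitive (prod_open d N) (prodmap f N) A.
Proof.
move=> [_ FA] [wm At] N N0 W1 W2 oW1 oW2 [x Wx] [y Wy].
have [e1 e10 H1] := oW1 x Wx; have [e2 e20 H2] := oW2 y Wy.
have [U [V [oU oV nU nV HN]]] := FURST _ (fun j => [set a | d (x j) a < e1])
  (fun j => [set a | d (y j) a < e2]) wm
  (fun j => And4 (ball_open _ _) (ball_open _ _) (ball_ne _ _ e10) (ball_ne _ _ e20))
  (enum 'I_N) (x (Ordinal N0)).
have AUV := At U V oU oV nU nV. apply: (FA _ _ AUV) => n /HN H.
have : forall j : 'I_N, exists a, d (x j) a < e1 /\ d (y j) (iter n f a) < e2.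
  by move=> j; have [a ha hb] := H j (mem_enum _ _); exists a.
move=> /choice [z Hz]; exists z; first by apply: H1 => j; case: (Hz j).
by rewrite iter_prodmap; apply: H2 => j; case: (Hz j).
Qed.

Lemma ii_to_i A : Furstenberg_family A ->
  (forall N : nat, (0 < N)%N -> A_transitive (prod_open d N) (prodmap f N) A) ->
  weakly_mixing d f /\ A_transitive (mopen d) f A.
Proof.
move=> FA H; apply: i_of_PQ => // U V Wt oU oV oW [u Uu] [v Vv] [w Ww].
pose i0 : 'I_2 := ord0; pose i1 : 'I_2 := ord_max.
have Hop : forall (P Q : set X), mopen d P -> mopen d Q ->
    prod_open d 2 [set x | P (x i0) /\ Q (x i1)].
  move=> P Q oP oQ x [Px Qx]; have [e1 e10 He1] := oP _ Px; have [e2 e20 He2] := oQ _ Qx.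
  exists (Num.min e1 e2); first by rewrite lt_min e10 e20.
  move=> y hy; split; [apply: He1; apply: lt_le_trans (hy i0) _|apply: He2; apply: lt_le_trans (hy i1) _];
    [exact: leminL|exact: leminR].
have := H 2%N isT _ _ (Hop U U oU oU) (Hop V Wt oV oW).
have ne : forall (P Q : set X) p q, P p -> Q q -> [set x : 'I_2 -> X | P (x i0) /\ Q (x i1)] !=set0.
  by move=> P Q p q Pp Qq; exists (fun j : 'I_2 => if j == i0 then p else q).
move=> /(_ (ne _ _ _ _ Uu Uu) (ne _ _ _ _ Vv Ww)).
case: FA => _ FA AN; apply: (FA _ _ AN) => n [x [x0 x1]]; rewrite iter_prodmap /= => -[h0 h1].
by split; [exists (x i0)|exists (x i1)].
Qed.

Lemma box_open N (p : 'I_N -> X) rho : prod_open d N [set z | forall i, d (p i) (z i) < rho].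
Proof.
move=> z /= Hz; have [e e0 He] := FINLB _ (enum 'I_N) (fun i => rho - d (p i) (z i)).
exists e => // y hy i; have := He i; rewrite mem_enum subr_gt0 => /(_ isT (Hz i)) hle.
have := dtri (p i) (z i) (y i); have := hy i; lra.
Qed.

Lemma box_ne N (p : 'I_N -> X) rho : 0 < rho -> [set z | forall i, d (p i) (z i) < rho] !=set0.
Proof. by move=> r0; exists p => i; rewrite dxx. Qed.

Definition mrgL {T : Type} N1 N2 (x : 'I_N1 -> T) (b : T) : 'I_(N1 + N2) -> T :=
  fun i => match fintype.split i with inl j => x j | inr _ => b end.
Definition mrgR {T : Type} N1 N2 (a : T) (y : 'I_N2 -> T) : 'I_(N1 + N2) -> T :=
  fun i => match fintype.split i with inl _ => a | inr k => y k end.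

Lemma mrgL_l {T : Type} N1 N2 (x : 'I_N1 -> T) b j : mrgL N1 N2 x b (lshift N2 j) = x j.
Proof. by rewrite /mrgL (unsplitK (inl j)). Qed.
Lemma mrgR_r {T : Type} N1 N2 a (y : 'I_N2 -> T) k : mrgR N1 N2 a y (rshift N1 k) = y k.
Proof. by rewrite /mrgR (unsplitK (inr k)). Qed.
Lemma mrgL_cases {T : Type} N1 N2 (x : 'I_N1 -> T) b i :
  (exists j, mrgL N1 N2 x b i = x j) \/ mrgL N1 N2 x b i = b.
Proof. by rewrite /mrgL; case: (fintype.split i) => [j|k]; [left; exists j|right]. Qed.
Lemma mrgR_cases {T : Type} N1 N2 a (y : 'I_N2 -> T) i :
  (exists k, mrgR N1 N2 a y i = y k) \/ mrgR N1 N2 a y i = a.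
Proof. by rewrite /mrgR; case: (fintype.split i) => [j|k]; [right|left; exists k]. Qed.

Lemma ord_pos N (j : 'I_N) : (0 < N)%N.
Proof. by case: j => m /= h; apply: leq_ltn_trans h. Qed.

Lemma range_Kspace N (z : 'I_N -> X) : (0 < N)%N -> Kspace d [set z i | i in setT].
Proof.
move=> N0; split; first by exists (z (Ordinal N0)); exists (Ordinal N0).
apply: (FINCOMP _ z); first by exists (z (Ordinal N0)); exists (Ordinal N0).
by move=> _ [i _ <-]; exists i.
Qed.

Lemma KEST N (K : set X) (p z : 'I_N -> X) rho : 0 < rho -> (forall i, K (p i)) ->
  (forall a, K a -> exists i, d a (p i) < rho) -> (forall i, d (p i) (z i) < rho) ->
  hausdorff d K [set z i | i in setT] <= rho + rho.
Proof.
move=> r0 Kp cov hz; apply: HUB; [exact: dpos|lra| |].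
  move=> a /cov [i hi]; exists (z i); split; first by exists i.
  apply: ltW; exact: dtri_lt hi (hz i).
move=> _ [i _ <-]; exists (p i); split => //; rewrite dsym; apply: ltW.
have := hz i; lra.
Qed.

Lemma ii_to_iii A : Furstenberg_family A ->
  (forall N : nat, (0 < N)%N -> A_transitive (prod_open d N) (prodmap f N) A) ->
  A_transitive (sub_open (Kspace d) (hausdorff d)) (fun K => f @` K) A.
Proof.
move=> [_ FA] H UU VV [sU oU] [sV oV] [K UK] [L VL].
have [e1 e10 He1] := oU K UK; have [e2 e20 He2] := oV L VL.
pose rho := Num.min e1 e2 / 3.
have m1 := leminL e1 e2; have m2 := leminR e1 e2.
have m0 : 0 < Num.min e1 e2 by rewrite lt_min e10 e20.
have r0 : 0 < rho by rewrite /rho; lra.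
have r1 : rho + rho < e1 by rewrite /rho; lra.
have r2 : rho + rho < e2 by rewrite /rho; lra.
have [[k0 Kk0] cK] := sU K UK; have [[l0 Ll0] cL] := sV L VL.
have [N1 [x [Kx cx]]] := CNET K rho cK r0.
have [N2 [y [Ly cy]]] := CNET L rho cL r0.
have N10 : (0 < N1)%N by have [j _] := cx k0 Kk0; exact: ord_pos j.
have N0 : (0 < N1 + N2)%N by rewrite ltn_addr.
pose p := mrgL N1 N2 x k0; pose q := mrgR N1 N2 l0 y.
have Kp : forall i, K (p i) by move=> i; rewrite /p; case: (mrgL_cases N1 N2 x k0 i) => [[j ->]|->].
have cp : forall a, K a -> exists i, d a (p i) < rho.
  by move=> a /cx [j hj]; exists (lshift N2 j); rewrite /p mrgL_l.
have Lq : forall i, L (q i) by move=> i; rewrite /q; case: (mrgR_cases N1 N2 l0 y i) => [[j ->]|->].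
have cq : forall a, L a -> exists i, d a (q i) < rho.
  by move=> a /cy [j hj]; exists (rshift N1 j); rewrite /q mrgR_r.
have := H _ N0 _ _ (box_open _ p rho) (box_open _ q rho) (box_ne _ p _ r0) (box_ne _ q _ r0).
move=> AN; apply: (FA _ _ AN) => n [z hz hn].
rewrite iter_prodmap in hn.
exists [set z i | i in setT].
  apply: He1; [exact: range_Kspace| exact: le_lt_trans (KEST _ _ _ _ _ r0 Kp cp hz) r1].
rewrite iter_image.
have -> : [set iter n f a | a in [set z i | i in setT]] = [set iter n f (z i) | i in setT].
  apply/seteqP; split => [_ [_ [i _ <-] <-]|_ [i _ <-]]; [by exists i|by exists (z i) => //; exists i].
apply: He2; [exact: range_Kspace| exact: le_lt_trans (KEST _ _ _ _ _ r0 Lq cq hn) r2].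
Qed.

Lemma KboundL (K L : set X) : Kspace d K -> Kspace d L ->
  exists M, forall p, K p -> exists q, L q /\ d p q <= M.
Proof.
move=> [_ cK] [[l0 Ll0] _]; have [M HM] := CB K l0 cK.
by exists M => p Kp; exists l0; split => //; rewrite dsym; apply: HM.
Qed.

Lemma iii_to_i A : Furstenberg_family A ->
  A_transitive (sub_open (Kspace d) (hausdorff d)) (fun K => f @` K) A ->
  weakly_mixing d f /\ A_transitive (mopen d) f A.
Proof.
move=> FA H; apply: i_of_PQ => // U V Wt oU oV oW [u Uu] [v Vv] [w Ww].
pose UU := [set K | Kspace d K /\ exists2 e, 0 < e & forall a b, K a -> d a b < e -> U b].
pose VV := [set K | Kspace d K /\ (exists b, K b /\ V b) /\ (exists b, K b /\ Wt b)].
have oUU : sub_open (Kspace d) (hausdorff d) UU.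
  split; first by move=> K [].
  move=> K [KK [e e0 He]]; exists (e / 2); first by lra.
  move=> L KL hKL; split => //; exists (e / 2); first by lra.
  move=> b c Lb hbc; have [M HM] := KboundL L K KL KK.
  have [a [Ka hba]] := HLB2 _ _ dpos K L _ M b HM hKL Lb.
  apply: (He a c Ka); have := dtri a b c; rewrite (dsym a b); lra.
have oVV : sub_open (Kspace d) (hausdorff d) VV.
  split; first by move=> K [].
  move=> K [KK [[b [Kb Vb]] [b' [Kb' Wb']]]].
  have [r r0 Hr] := oV b Vb; have [r' r'0 Hr'] := oW b' Wb'.
  exists (Num.min r r'); first by rewrite lt_min r0 r'0.
  move=> L KL hKL; have [M HM] := KboundL K L KK KL.
  have [c [Lc hc]] := HLB1 _ _ dpos K L _ M b HM hKL Kb.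
  have [c' [Lc' hc']] := HLB1 _ _ dpos K L _ M b' HM hKL Kb'.
  split => //; split; [exists c|exists c']; split => //;
    [apply: Hr; apply: lt_le_trans hc _|apply: Hr'; apply: lt_le_trans hc' _];
    [exact: leminL|exact: leminR].
have nUU : UU !=set0.
  have [e e0 He] := oU u Uu.
  exists [set y | y = u]; split.
    split; first by exists u.
    by apply: (FINCOMP _ (fun _ : 'I_1 => u)); [exists u|move=> y ->; exists ord0].
  by exists e => // a b -> hb; apply: He.
have nVV : VV !=set0.
  exists [set y | y = v \/ y = w]; split; last by split; [exists v|exists w]; split => //; [left|right].
  split; first by exists v; left.
  apply: (FINCOMP _ (fun i : 'I_2 => if i == ord0 then v else w)); first by exists v; left.
  by move=> y [->|->]; [exists ord0|exists ord_max].
have := H UU VV oUU oVV nUU nVV.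
case: FA => _ FA AN; apply: (FA _ _ AN) => n [K [KK [e e0 He]] [_ [[b [Kb Vb]] [b' [Kb' Wb']]]]].
move: Kb Kb' Vb Wb'; rewrite iter_image => -[a Ka <-] [a' Ka' <-] Vb Wb'.
by split; [exists a; [apply: (He a a Ka); rewrite dxx|]|exists a'; [apply: (He a' a' Ka'); rewrite dxx|]].
Qed.

Lemma levE (g : X -> R) a : a != 0 -> level d g a = [set x | a <= g x].
Proof. by move=> h; rewrite /level (negbTE h). Qed.
Lemma lev0E (g : X -> R) : level d g 0 = mclosure d [set x | 0 < g x].
Proof. by rewrite /level eqxx. Qed.
Lemma pos_clos (g : X -> R) x : 0 < g x -> mclosure d [set x | 0 < g x] x.
Proof. by move=> h e e0; exists x => //; rewrite dxx. Qed.

Definition good (u : X -> R) rho N (s : 'I_N -> X) (c : 'I_N -> R) :=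
  [/\ forall j, 0 <= c j <= 1,
      forall a, 0 < u a -> exists j, d a (s j) < rho /\ u a <= c j,
      forall j, c j <= u (s j) & exists j, c j = 1].

Lemma STEP u rho : fuzzy d u -> 0 < rho -> exists N s c, good u rho N s c.
Proof.
move=> [u01 uusc cu0 [a1 ha1]] r0.
have r20 : 0 < rho / 2 by lra.
have [N [x [Kx cx]]] := CNET _ (rho / 2) cu0 r20.
have Csupp : forall y, 0 < u y -> level d u 0 y by move=> y h; rewrite lev0E; exact: pos_clos.
have : forall j, exists s, d (x j) s <= rho / 2 /\ forall y, d (x j) y <= rho / 2 -> u y <= u s.
  move=> j; apply: (CMAX _ u (x j) (rho / 2) cu0 uusc Csupp u01); lra.
move=> /choice [s Hs]; exists N, s, (fun j => u (s j)); split => //.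
- by move=> j; apply: u01.
- move=> a ua; have [j hj] := cx a (Csupp a ua); exists j; case: (Hs j) => h1 h2; split.
    have := dtri a (x j) (s j); lra.
  by apply: h2; rewrite dsym; apply: ltW.
- move: ha1; rewrite levE ?oner_eq0 // => /= ha1.
  have ua1 : 0 < u a1 by lra.
  have [j hj] := cx a1 (Csupp a1 ua1); exists j; case: (Hs j) => h1 h2.
  have : u a1 <= u (s j) by apply: h2; rewrite dsym; apply: ltW.
  case/andP: (u01 (s j)) => _ h; lra.
Qed.

Section Est.
Variables (u : X -> R) (rho : R) (N : nat) (s : 'I_N -> X) (c : 'I_N -> R) (z : 'I_N -> X).
Hypothesis (uf : fuzzy d u) (r0 : 0 < rho) (gd : good u rho N s c) (hz : forall j, d (s j) (z j) < rho).

Lemma F1 a : 0 < u a -> exists j, d a (z j) < rho + rho /\ u a <= W z c (z j).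
Proof.
have r0' := r0.
case: gd => _ G1 _ _ /G1 [j [h1 h2]]; exists j; split; first exact: dtri_lt h1 (hz j).
exact: le_trans h2 (Wge _ _ _ _).
Qed.

Lemma F2 y : 0 < W z c y -> exists j, y = z j /\ W z c y <= u (s j) /\ d y (s j) < rho.
Proof.
have r0' := r0.
case: gd => _ _ G2 _ /(Wpos _ _ _ _) [j [ej E]]; exists j; rewrite E -ej; split => //; split => //.
by rewrite dsym.
Qed.

Lemma F3 a : level d u 0 a -> exists j, d a (z j) < rho + rho + rho /\ 0 < W z c (z j).
Proof.
have r0' := r0.
rewrite lev0E => /(_ rho r0) [a' /= ua' da'].
have [j [h1 h2]] := F1 _ ua'; exists j; split; last exact: lt_le_trans ua' h2.
have := dtri a a' (z j); lra.
Qed.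

Lemma F4 y : level d (W z c) 0 y -> exists j, d y (s j) < rho + rho /\ 0 < u (s j).
Proof.
have r0' := r0.
rewrite lev0E => /(_ rho r0) [y' /= wy' dy'].
have [j [ej [h1 h2]]] := F2 _ wy'; exists j; split; last exact: lt_le_trans wy' h1.
have := dtri y y' (s j); lra.
Qed.

Lemma c01 : forall j, 0 <= c j <= 1. Proof. by case: gd. Qed.

Lemma EST_inf : d_inf d u (W z c) <= rho + rho + rho.
Proof.
have r0' := r0.
apply: supLE; last by lra.
move=> _ [al Ial <-]; apply: HUB; [exact: dpos|lra| |].
- case: (eqVneq al 0) => [->|nz].
    move=> a /F3 [j [h1 h2]]; exists (z j); split; [rewrite lev0E; exact: pos_clos|exact: ltW].
  rewrite !levE // => a /= ha.
  have al0 : 0 < al by case/andP: Ial => h _; rewrite lt_neqAle eq_sym nz h.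
  have [j [h1 h2]] := F1 a (lt_le_trans al0 ha).
  exists (z j); split; [exact: le_trans ha h2|apply: ltW; lra].
- case: (eqVneq al 0) => [->|nz].
    move=> y /F4 [j [h1 h2]]; exists (s j); split; [rewrite lev0E; exact: pos_clos|apply: ltW; lra].
  rewrite !levE // => y /= hy.
  have al0 : 0 < al by case/andP: Ial => h _; rewrite lt_neqAle eq_sym nz h.
  have [j [ej [h1 h2]]] := F2 y (lt_le_trans al0 hy).
  exists (s j); split; [exact: le_trans hy h1|apply: ltW; lra].
Qed.

Lemma idhomeo : incr_homeo (fun a : R => a).
Proof.
split => // [b Ib|a Ia e e0]; first by exists b.
by exists e.
Qed.

Lemma EST_0 : d_0 d u (W z c) <= rho + rho + rho.
Proof.
have r0' := r0.
apply: inf_le_elt; first by move=> y [h _]; exact: ltW.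
split; first by lra.
exists (fun a => a); split; [exact: idhomeo| |exact: EST_inf].
by apply: supLE; [move=> _ [a _ <-]; rewrite subrr normr0; lra|lra].
Qed.

Lemma dbar_le (p q : X * R) (r : R) : d p.1 q.1 <= r -> `|p.2 - q.2| <= r -> dbar d p q <= r.
Proof. by move=> h1 h2; rewrite /dbar ge_max h1 h2. Qed.

Lemma dbar0 (p q : X * R) : 0 <= dbar d p q.
Proof. by rewrite /dbar le_max dpos. Qed.

Lemma u0 y : 0 <= u y. Proof. by case: uf => h _ _ _; case/andP: (h y). Qed.

Lemma lt_of_I01 (al : R) : I01 al -> al != 0 -> 0 < al.
Proof. by case/andP => h _ nz; rewrite lt_neqAle eq_sym nz h. Qed.

Lemma EST_E : d_E d u (W z c) <= rho + rho + rho.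
Proof.
have r0' := r0.
have cc := c01.
apply: HUB; [exact: dbar0|lra| |].
- move=> [a al] [Ial hal] /=; case: (eqVneq al 0) => [e0|nz].
    exists (a, al); split; last by apply: dbar_le; rewrite /= ?dxx ?subrr ?normr0; lra.
    by split => //; rewrite e0 Wge0.
  have [j [h1 h2]] := F1 a (lt_le_trans (lt_of_I01 _ Ial nz) hal).
  exists (z j, al); split; first by split => //; exact: le_trans hal h2.
  by apply: dbar_le; rewrite /= ?subrr ?normr0; lra.
- move=> [y be] [Ibe hbe] /=; case: (eqVneq be 0) => [e0|nz].
    exists (y, be); split; last by apply: dbar_le; rewrite /= ?dxx ?subrr ?normr0; lra.
    by split => //; rewrite e0 u0.
  have [j [ej [h1 h2]]] := F2 y (lt_le_trans (lt_of_I01 _ Ibe nz) hbe).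
  exists (s j, be); split; first by split => //; exact: le_trans hbe h1.
  by apply: dbar_le; rewrite /= ?subrr ?normr0; lra.
Qed.

Lemma EST_S : d_S d u (W z c) <= rho + rho + rho.
Proof.
have r0' := r0.
have cc := c01.
apply: HUB; [exact: dbar0|lra| |].
- move=> [a al] [[Ial hal] la] /=; case: (eqVneq al 0) => [e0|nz].
    have [j [h1 h2]] := F3 a la.
    exists (z j, al); split; last by apply: dbar_le; rewrite /= ?subrr ?normr0; lra.
    by split; [split => //; rewrite e0 Wge0|rewrite lev0E; exact: pos_clos].
  have al0 := lt_of_I01 _ Ial nz.
  have [j [h1 h2]] := F1 a (lt_le_trans al0 hal).
  exists (z j, al); split; last by apply: dbar_le; rewrite /= ?subrr ?normr0; lra.
  split; first by split => //; exact: le_trans hal h2.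
  rewrite lev0E; apply: pos_clos; apply: lt_le_trans h2; exact: lt_le_trans al0 hal.
- move=> [y be] [[Ibe hbe] ly] /=; case: (eqVneq be 0) => [e0|nz].
    have [j [h1 h2]] := F4 y ly.
    exists (s j, be); split; last by apply: dbar_le; rewrite /= ?subrr ?normr0; lra.
    by split; [split => //; rewrite e0 u0|rewrite lev0E; exact: pos_clos].
  have be0 := lt_of_I01 _ Ibe nz.
  have [j [ej [h1 h2]]] := F2 y (lt_le_trans be0 hbe).
  exists (s j, be); split; last by apply: dbar_le; rewrite /= ?subrr ?normr0; lra.
  split; first by split => //; exact: le_trans hbe h1.
  rewrite lev0E; apply: pos_clos; apply: lt_le_trans h1; exact: lt_le_trans be0 hbe.
Qed.

End Est.

Definition mrg2 {T : Type} N1 N2 (x : 'I_N1 -> T) (y : 'I_N2 -> T) : 'I_(N1 + N2) -> T :=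
  fun i => match fintype.split i with inl j => x j | inr k => y k end.
Lemma mrg2_l {T : Type} N1 N2 (x : 'I_N1 -> T) y j : mrg2 N1 N2 x y (lshift N2 j) = x j.
Proof. by rewrite /mrg2 (unsplitK (inl j)). Qed.
Lemma mrg2_r {T : Type} N1 N2 (x : 'I_N1 -> T) y k : mrg2 N1 N2 x y (rshift N1 k) = y k.
Proof. by rewrite /mrg2 (unsplitK (inr k)). Qed.

Lemma good_merge u v rho N1 N2 s a t b :
  good u rho N1 s a -> good v rho N2 t b ->
  exists j1 k1, [/\ good u rho (N1 + N2) (mrgL N1 N2 s (s j1)) (mrg2 N1 N2 a b),
     good v rho (N1 + N2) (mrgR N1 N2 (t k1) t) (mrg2 N1 N2 a b) & (0 < N1 + N2)%N].
Proof.
move=> [a01 G1 G2 [j1 aj1]] [b01 H1 H2 [k1 bk1]]; exists j1, k1; split.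
- split.
  + by move=> i; rewrite /mrg2; case: (fintype.split i).
  + by move=> x /G1 [j hj]; exists (lshift N2 j); rewrite mrgL_l mrg2_l.
  + move=> i; rewrite /mrgL /mrg2; case: (fintype.split i) => [j|k]; first exact: G2.
    have := G2 j1; case/andP: (b01 k) => _ h; rewrite aj1 => h'; exact: le_trans h h'.
  + by exists (lshift N2 j1); rewrite mrg2_l.
- split.
  + by move=> i; rewrite /mrg2; case: (fintype.split i).
  + by move=> x /H1 [k hk]; exists (rshift N1 k); rewrite mrgR_r mrg2_r.
  + move=> i; rewrite /mrgR /mrg2; case: (fintype.split i) => [j|k]; last exact: H2.
    have := H2 k1; case/andP: (a01 j) => _ h; rewrite bk1 => h'; exact: le_trans h h'.
  + by exists (lshift N2 j1); rewrite mrg2_l.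
- exact: ord_pos (lshift N2 j1).
Qed.

Lemma ii_to_F A (D : (X -> R) -> (X -> R) -> R) : Furstenberg_family A ->
  (forall u rho N s c z, fuzzy d u -> 0 < rho -> good u rho N s c ->
     (forall j, d (s j) (z j) < rho) -> D u (W z c) <= rho + rho + rho) ->
  (forall N : nat, (0 < N)%N -> A_transitive (prod_open d N) (prodmap f N) A) ->
  A_transitive (sub_open (fuzzy d) D) (zadeh f) A.
Proof.
move=> [_ FA] EST H UU VV [sU oU] [sV oV] [u Uu] [v Vv].
have [e1 e10 He1] := oU u Uu; have [e2 e20 He2] := oV v Vv.
pose rho := Num.min e1 e2 / 4.
have m1 := leminL e1 e2; have m2 := leminR e1 e2.
have m0 : 0 < Num.min e1 e2 by rewrite lt_min e10 e20.
have r0 : 0 < rho by rewrite /rho; lra.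
have r1 : rho + rho + rho < e1 by rewrite /rho; lra.
have r2 : rho + rho + rho < e2 by rewrite /rho; lra.
have fu := sU u Uu; have fv := sV v Vv.
have [N1 [s [a ga]]] := STEP u rho fu r0.
have [N2 [t [b gb]]] := STEP v rho fv r0.
have [j1 [k1 [gu gv N0]]] := good_merge _ _ _ _ _ _ _ _ _ ga gb.
have c01' : forall i, 0 <= mrg2 N1 N2 a b i <= 1 by case: gu.
have c1 : exists i, mrg2 N1 N2 a b i = 1 by case: gu.
have := H _ N0 _ _ (box_open _ (mrgL N1 N2 s (s j1)) rho) (box_open _ (mrgR N1 N2 (t k1) t) rho)
  (box_ne _ _ _ r0) (box_ne _ _ _ r0).
move=> AN; apply: (FA _ _ AN) => n [z hz hn].
rewrite iter_prodmap in hn.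
exists (W z (mrg2 N1 N2 a b)).
  apply: He1; [exact: (Wfuzzy _ _ _ c01' c1)|exact: le_lt_trans (EST _ _ _ _ _ _ fu r0 gu hz) r1].
rewrite iter_zadehW //.
apply: He2; [exact: (Wfuzzy _ _ _ c01' c1)|exact: le_lt_trans (EST _ _ _ _ _ _ fv r0 gv hn) r2].
Qed.

Definition LB2 (D : (X -> R) -> (X -> R) -> R) := forall u v, fuzzy d u -> fuzzy d v ->
  forall r, D u v < r ->
  (forall a t, 0 < t -> t <= u a -> exists b, d a b < r /\ t - r < v b) /\
  (forall b t, 0 < t -> t <= v b -> exists a, d b a < r /\ t - r < u a).

Lemma F_to_i A D : Furstenberg_family A -> LB2 D ->
  A_transitive (sub_open (fuzzy d) D) (zadeh f) A ->
  weakly_mixing d f /\ A_transitive (mopen d) f A.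
Proof.
move=> FA LB H; apply: i_of_PQ => // U V Wt oU oV oW [u Uu] [v Vv] [w Ww].
pose UU := [set g | fuzzy d g /\ exists e, [/\ 0 < e, e <= 1/4 &
   forall a' a, 1/2 - e < g a' -> d a' a < e -> U a]].
pose VV := [set g | fuzzy d g /\ exists e, [/\ 0 < e, e <= 1/4,
   (exists b, 1/2 + e < g b /\ forall c, d b c < e -> V c) &
   (exists b, 1/2 + e < g b /\ forall c, d b c < e -> Wt c)]].
have oUU : sub_open (fuzzy d) D UU.
  split; first by move=> g [].
  move=> g [fg [e [e0 e4 He]]]; exists (e / 2); first lra.
  move=> g' fg' hD; split => //; exists (e / 2); split; [lra|lra|].
  move=> a' a ha' da'.
  have [_ L2] := LB g g' fg fg' (e/2) hD.
  have g'0 : 0 < g' a' by lra.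
  have [a'' [d1 h1]] := L2 a' (g' a') g'0 (lexx _).
  apply: (He a'' a); first lra.
  have := dtri a'' a' a; rewrite (dsym a'' a'); lra.
have oVV : sub_open (fuzzy d) D VV.
  split; first by move=> g [].
  move=> g [fg [e [e0 e4 [b [hb Hb]] [b' [hb' Hb']]]]]; exists (e / 2); first lra.
  move=> g' fg' hD; split => //; exists (e / 2); split; [lra|lra| |].
  - have [L1 _] := LB g g' fg fg' (e/2) hD.
    have gb0 : 0 < g b by lra.
    have [c [dc hc]] := L1 b (g b) gb0 (lexx _).
    exists c; split; first lra.
    move=> c' dc'; apply: Hb; have := dtri b c c'; lra.
  - have [L1 _] := LB g g' fg fg' (e/2) hD.
    have gb0 : 0 < g b' by lra.
    have [c [dc hc]] := L1 b' (g b') gb0 (lexx _).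
    exists c; split; first lra.
    move=> c' dc'; apply: Hb'; have := dtri b' c c'; lra.
have c01 : forall N (j : 'I_N), 0 <= (fun _ => 1 : R) j <= 1 by move=> N j /=; lra.
have nUU : UU !=set0.
  have [eU eU0 HU] := oU u Uu.
  exists (W (fun _ : 'I_1 => u) (fun _ => 1)); split.
    by apply: Wfuzzy; [exact: c01|exists ord0].
  have m0 : 0 < Num.min eU (1/4) by rewrite lt_min eU0 /=; lra.
  exists (Num.min eU (1/4)); split => //; first exact: leminR.
  move=> a' a ha' da'; have m1 := leminR eU (1/4).
  have : 0 < W (fun _ : 'I_1 => u) (fun _ => 1) a' by lra.
  move=> /Wpos [j [ej _]]; apply: HU; rewrite ej.
  exact: lt_le_trans da' (leminL _ _).
have nVV : VV !=set0.
  have [ev ev0 Hv] := oV v Vv; have [ew ew0 Hw] := oW w Ww.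
  pose zz := fun i : 'I_2 => if i == ord0 then v else w.
  exists (W zz (fun _ => 1)); split.
    by apply: Wfuzzy; [exact: c01|exists ord0].
  pose e := Num.min (Num.min ev ew) (1/4).
  have m1 := leminR (Num.min ev ew) (1/4); have m2 := leminL (Num.min ev ew) (1/4).
  have m3 := leminL ev ew; have m4 := leminR ev ew.
  have e0 : 0 < e by rewrite /e !lt_min ev0 ew0 /=; lra.
  exists e; split => //.
  - exists v; split.
      have := Wge _ zz (fun _ => 1) ord0; rewrite /zz eqxx /= => h; rewrite /e; lra.
    move=> c dc; apply: Hv; rewrite /e in dc; lra.
  - exists w; split.
      have := Wge _ zz (fun _ => 1) ord_max; rewrite /zz /= => h; rewrite /e; lra.
    move=> c dc; apply: Hw; rewrite /e in dc; lra.
have := H UU VV oUU oVV nUU nVV.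
case: FA => _ FA AN; apply: (FA _ _ AN).
move=> n [g [fg [e [e0 e4 He]]] [_ [e' [e'0 e'4 [b [hb Hb]] [b' [hb' Hb']]]]]].
have h12 : (0 : R) <= 1/2 by lra.
have [a [ea ha]] := ZI n g b (1/2) h12 (ltac:(lra)).
have [a' [ea' ha']] := ZI n g b' (1/2) h12 (ltac:(lra)).
split; [exists a|exists a'].
- by apply: (He a a); [lra|rewrite dxx].
- by rewrite ea; apply: Hb; rewrite dxx.
- by apply: (He a' a'); [lra|rewrite dxx].
- by rewrite ea'; apply: Hb'; rewrite dxx.
Qed.

Lemma fz01 u : fuzzy d u -> forall x, 0 <= u x <= 1.
Proof. by case. Qed.

Lemma fz1 u : fuzzy d u -> exists p, u p = 1.
Proof.
move=> fu; case: (fu) => _ _ _ [p]; rewrite levE ?oner_eq0 // => /= h.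
exists p; apply/eqP; rewrite eq_le h andbT; by case/andP: (fz01 u fu p).
Qed.

Lemma dbar_lt (p q : X * R) r : dbar d p q < r -> d p.1 q.1 < r /\ p.2 - r < q.2 /\ q.2 - r < p.2.
Proof.
rewrite /dbar gt_max => /andP [h1]; rewrite ltr_norml => /andP [h2 h3]; split => //; lra.
Qed.

Lemma lev_sub0 u al x : fuzzy d u -> I01 al -> level d u al x -> level d u 0 x.
Proof.
move=> fu Ial; case: (eqVneq al 0) => [->//|nz]; rewrite levE // => /= h.
rewrite lev0E; apply: pos_clos; exact: lt_le_trans (lt_of_I01 _ Ial nz) h.
Qed.

Lemma lev1 u p al : u p = 1 -> I01 al -> level d u al p.
Proof.
move=> up Ial; case: (eqVneq al 0) => [->|nz].
  by rewrite lev0E; apply: pos_clos; rewrite up ltr01.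
by rewrite levE //= up; case/andP: Ial.
Qed.

Lemma LB_E : LB2 (d_E d).
Proof.
move=> u v fu fv r hr; have u01 := fz01 u fu; have v01 := fz01 v fv.
have B : forall g, (forall x, 0 <= g x <= 1) -> forall g', (forall x, 0 <= g' x <= 1) ->
    forall p, endg g p -> exists q, endg g' q /\ dbar d p q <= 1.
  move=> g g01 g' g'01 [a al] [Ial hal]; exists (a, 0); split.
    by split; [rewrite /I01 lexx ler01|case/andP: (g'01 a)].
  apply: dbar_le; rewrite /= ?dxx ?subr0 ?ler01 //.
  by case/andP: Ial => h1 h2; rewrite ger0_norm.
split.
- move=> a t t0 ht; have It : I01 t by case/andP: (u01 a) => _ h; rewrite /I01 ltW //=; lra.
  have [[b be] [[Ibe hbe] hd]] := HLB1 _ _ dbar0 (endg u) (endg v) r 1 (a, t) (B u u01 v v01) hr (conj It ht).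
  have [h1 [h2 h3]] := dbar_lt _ _ _ hd; exists b; split => //=; simpl in *; lra.
- move=> b t t0 ht; have It : I01 t by case/andP: (v01 b) => _ h; rewrite /I01 ltW //=; lra.
  have [[a al] [[Ial hal] hd]] := HLB2 _ _ dbar0 (endg u) (endg v) r 1 (b, t) (B v v01 u u01) hr (conj It ht).
  have [h1 [h2 h3]] := dbar_lt _ _ _ hd; exists a; split => //=; simpl in *; lra.
Qed.

Lemma LB_S : LB2 (d_S d).
Proof.
move=> u v fu fv r hr; have u01 := fz01 u fu; have v01 := fz01 v fv.
have B : forall g, fuzzy d g -> forall g', fuzzy d g' ->
    exists M, forall p, sendg d g p -> exists q, sendg d g' q /\ dbar d p q <= M.
  move=> g fg g' fg'; have [pv hpv] := fz1 g' fg'.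
  have [_ _ cg _] := fg; have [M HM] := CB _ pv cg.
  have I0 : I01 (0 : R) by rewrite /I01 lexx ler01.
  exists (M + 1) => -[a al] [[Ial hal] la]; exists (pv, 0); split.
    split; first by split => //=; rewrite hpv ler01.
    by change (level d g' 0 pv); apply: lev1.
  have h1 := HM a la; rewrite dsym in h1; have h0 := dpos a pv.
  apply: dbar_le; rewrite /= ?subr0; first lra.
  by case/andP: Ial => /= h2 h3; rewrite ger0_norm //; lra.
split.
- move=> a t t0 ht; have It : I01 t by case/andP: (u01 a) => _ h; rewrite /I01 ltW //=; lra.
  have [M HM] := B u fu v fv.
  have ina : sendg d u (a, t).
    by split; [split|change (level d u 0 a); rewrite lev0E; apply: pos_clos; exact: lt_le_trans t0 ht].
  have [[b be] [[[Ibe hbe] _] hd]] := HLB1 _ _ dbar0 (sendg d u) (sendg d v) r M (a, t) HM hr ina.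
  have [h1 [h2 h3]] := dbar_lt _ _ _ hd; exists b; split => //=; simpl in *; lra.
- move=> b t t0 ht; have It : I01 t by case/andP: (v01 b) => _ h; rewrite /I01 ltW //=; lra.
  have [M HM] := B v fv u fu.
  have inb : sendg d v (b, t).
    by split; [split|change (level d v 0 b); rewrite lev0E; apply: pos_clos; exact: lt_le_trans t0 ht].
  have [[a al] [[[Ial hal] _] hd]] := HLB2 _ _ dbar0 (sendg d u) (sendg d v) r M (b, t) HM hr inb.
  have [h1 [h2 h3]] := dbar_lt _ _ _ hd; exists a; split => //=; simpl in *; lra.
Qed.

Definition Bnd (g1 g2 : X -> R) (M : R) := forall al, I01 al ->
  (forall p, level d g1 al p -> exists q, level d g2 al q /\ d p q <= M) /\
  (forall q, level d g2 al q -> exists p, level d g1 al p /\ d q p <= M).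

Lemma I01_0 : I01 (0 : R). Proof. by rewrite /I01 lexx ler01. Qed.

Lemma Bnd_of (g1 g2 : X -> R) (C1 C2 : set X) (p1 p2 : X) : mcompact d C1 -> mcompact d C2 ->
  (forall al x, I01 al -> level d g1 al x -> C1 x) ->
  (forall al x, I01 al -> level d g2 al x -> C2 x) ->
  (forall al, I01 al -> level d g1 al p1) -> (forall al, I01 al -> level d g2 al p2) ->
  exists M, 0 <= M /\ Bnd g1 g2 M.
Proof.
move=> c1 c2 s1 s2 h1 h2.
have [M1 H1] := CB C1 p2 c1; have [M2 H2] := CB C2 p1 c2.
have M10 : 0 <= M1 by apply: le_trans (H1 p1 (s1 0 p1 I01_0 (h1 0 I01_0))); exact: dpos.
have M20 : 0 <= M2 by apply: le_trans (H2 p2 (s2 0 p2 I01_0 (h2 0 I01_0))); exact: dpos.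
exists (M1 + M2); split; first lra.
move=> al Ial; split.
- move=> p hp; exists p2; split; first exact: h2.
  have := H1 p (s1 _ _ Ial hp); rewrite (dsym p2 p); lra.
- move=> q hq; exists p1; split; first exact: h1.
  have := H2 q (s2 _ _ Ial hq); rewrite (dsym p1 q); lra.
Qed.

Lemma DINF_LT (g1 g2 : X -> R) (M r al : R) : 0 <= M -> Bnd g1 g2 M -> d_inf d g1 g2 < r -> I01 al ->
  (forall p, level d g1 al p -> exists q, level d g2 al q /\ d p q < r) /\
  (forall q, level d g2 al q -> exists p, level d g1 al p /\ d q p < r).
Proof.
move=> M0 B hr Ial; have [B1 B2] := B al Ial.
have hH : hausdorff d (level d g1 al) (level d g2 al) < r.
  apply: le_lt_trans hr; apply: (le_supP _ _ M); last by exists al.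
  move=> _ [b Ib <-]; have [B1' B2'] := B b Ib; apply: HUB => //; exact: dpos.
split => [p hp|q hq].
  exact: (HLB1 _ _ dpos _ _ r M p B1 hH hp).
exact: (HLB2 _ _ dpos _ _ r M q B2 hH hq).
Qed.

Lemma xi0 (xi : R -> R) : incr_homeo xi -> xi 0 = 0.
Proof.
case=> inc maps surj _; have [a Ia ea] := surj 0 I01_0.
case: (eqVneq a 0) => [e|nz]; first by move: ea; rewrite e.
have := inc 0 a I01_0 Ia (lt_of_I01 _ Ia nz); rewrite ea => h.
case/andP: (maps 0 I01_0) => h' _; by move: (lt_le_trans h h'); rewrite ltxx.
Qed.

Lemma I01_1 : I01 (1 : R). Proof. by rewrite /I01 lexx ler01. Qed.

Lemma xi1 (xi : R -> R) : incr_homeo xi -> xi 1 = 1.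
Proof.
case=> inc maps surj _; have [a Ia ea] := surj 1 I01_1.
case: (eqVneq a 1) => [e|nz]; first by move: ea; rewrite e.
have a1 : a < 1 by case/andP: Ia => _ h; rewrite lt_neqAle nz h.
have := inc a 1 Ia I01_1 a1; rewrite ea => h.
case/andP: (maps 1 I01_1) => _ h'; by move: (lt_le_trans h h'); rewrite ltxx.
Qed.

Lemma xi_pos (xi : R -> R) (a : R) : incr_homeo xi -> I01 a -> 0 < a -> 0 < xi a.
Proof.
move=> hxi Ia a0; have := hxi; case=> inc _ _ _.
by have := inc 0 a I01_0 Ia a0; rewrite xi0.
Qed.

Lemma Bnd_fz (u v : X -> R) : fuzzy d u -> fuzzy d v -> exists M, 0 <= M /\ Bnd u v M.
Proof.
move=> fu fv; have [pu hu] := fz1 u fu; have [pv hv] := fz1 v fv.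
case: (fu) => _ _ cu _; case: (fv) => _ _ cv _.
apply: (Bnd_of u v _ _ pu pv cu cv).
- by move=> al x Ial; apply: lev_sub0.
- by move=> al x Ial; apply: lev_sub0.
- by move=> al Ial; apply: lev1.
- by move=> al Ial; apply: lev1.
Qed.

Lemma LB_inf : LB2 (d_inf d).
Proof.
move=> u v fu fv r hr; have [M [M0 B]] := Bnd_fz u v fu fv.
have u01 := fz01 u fu; have v01 := fz01 v fv.
split.
- move=> a t t0 ht; have It : I01 t by case/andP: (u01 a) => _ h; rewrite /I01 ltW //=; lra.
  have nz : t != 0 by rewrite gt_eqF.
  have [L1 _] := DINF_LT u v M r t M0 B hr It.
  have la : level d u t a by rewrite levE.
  have [b [hb db]] := L1 a la.
  exists b; split => //; move: hb; rewrite levE //= => hb; have := dpos a b; lra.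
- move=> b t t0 ht; have It : I01 t by case/andP: (v01 b) => _ h; rewrite /I01 ltW //=; lra.
  have nz : t != 0 by rewrite gt_eqF.
  have [_ L2] := DINF_LT u v M r t M0 B hr It.
  have lb : level d v t b by rewrite levE.
  have [a [ha da]] := L2 b lb.
  exists a; split => //; move: ha; rewrite levE //= => ha; have := dpos b a; lra.
Qed.

Lemma LB_0 : LB2 (d_0 d).
Proof.
move=> u v fu fv r hr.
have u01 := fz01 u fu; have v01 := fz01 v fv.
pose E := [set e : R | 0 < e /\ exists xi : R -> R, [/\ incr_homeo xi,
  sup [set `|xi a - a| | a in @I01 R] <= e & d_inf d u (xi \o v) <= e]].
have nE : E !=set0.
  exists (`|d_inf d u v| + 1); split; first by have := normr_ge0 (d_inf d u v); lra.
  exists (fun a => a); split; [exact: idhomeo| |].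
    apply: supLE; [move=> _ [a _ <-]; rewrite subrr normr0|];
      have := normr_ge0 (d_inf d u v); lra.
  have := ler_norm (d_inf d u v); rewrite /=; lra.
have [e [e0 [xi [hxi hsup hd]]] er] := inf_lt nE hr.
have hxa : forall a, I01 a -> `|xi a - a| <= e.
  move=> a Ia; apply: le_trans hsup; apply: (le_supP _ _ 1); last by exists a.
  move=> _ [b Ib <-]; have := hxi; case=> _ maps _ _.
  case/andP: (maps b Ib) => h1 h2; case/andP: Ib => h3 h4.
  rewrite ler_norml; apply/andP; split; lra.
have key : forall y, 0 < xi (v y) -> 0 < v y.
  move=> y h; rewrite lt_neqAle; apply/andP; split; last by case/andP: (v01 y).
  by apply/eqP => e'; move: h; rewrite -e' xi0 // ltxx.
have [M [M0 B]] : exists M, 0 <= M /\ Bnd u (xi \o v) M.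
  have [pu hu] := fz1 u fu; have [pv hv] := fz1 v fv.
  case: (fu) => _ _ cu _; case: (fv) => _ _ cv _.
  apply: (Bnd_of u (xi \o v) _ _ pu pv cu cv).
  - by move=> al x Ial; apply: lev_sub0.
  - move=> al x Ial; rewrite lev0E; case: (eqVneq al 0) => [->|nz].
      rewrite lev0E => hx e1 e10; have [y hy dy] := hx e1 e10; exists y => //; exact: key.
    rewrite levE // => /= hx; apply: pos_clos; apply: key; exact: lt_le_trans (lt_of_I01 _ Ial nz) hx.
  - by move=> al Ial; apply: lev1.
  - by move=> al Ial; apply: lev1 => //=; rewrite hv xi1.
have hr' : d_inf d u (xi \o v) < r by exact: le_lt_trans hd er.
split.
- move=> a t t0 ht; have It : I01 t by case/andP: (u01 a) => _ h; rewrite /I01 ltW //=; lra.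
  have nz : t != 0 by rewrite gt_eqF.
  have [L1 _] := DINF_LT _ _ M r t M0 B hr' It.
  have la : level d u t a by rewrite levE.
  have [b [hb db]] := L1 a la.
  move: hb; rewrite levE //= => hb.
  have := hxa (v b) (v01 b); rewrite ler_norml => /andP [h1 h2].
  by exists b; split => //; lra.
- move=> b t t0 ht.
  have vb0 : 0 < v b := lt_le_trans t0 ht.
  have Ial : I01 (xi (v b)) by have := hxi; case=> _ maps _ _; exact: (maps _ (v01 b)).
  have al0 : 0 < xi (v b) := xi_pos _ _ hxi (v01 b) vb0.
  have [_ L2] := DINF_LT _ _ M r _ M0 B hr' Ial.
  have lb : level d (xi \o v) (xi (v b)) b by rewrite levE ?gt_eqF //=.
  have [a [ha da]] := L2 b lb.
  move: ha; rewrite levE ?gt_eqF //= => ha.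
  have := hxa (v b) (v01 b); rewrite ler_norml => /andP [h1 h2].
  by exists a; split => //; lra.
Qed.
End Metric.

Theorem theorem3p1 (X : Type) (d : X -> X -> Rdefinitions.R) (f : X -> X)
  (A : set (set nat)) :
  Furstenberg_family A -> is_metric d -> mcontinuous d f ->
  [<-> weakly_mixing d f /\ A_transitive (mopen d) f A;
       forall N : nat, (0 < N)%N -> A_transitive (prod_open d N) (prodmap f N) A;
       A_transitive (sub_open (Kspace d) (hausdorff d)) (fun K => f @` K) A;
       A_transitive (sub_open (fuzzy d) (d_inf d)) (zadeh f) A;
       A_transitive (sub_open (fuzzy d) (d_0 d)) (zadeh f) A;
       A_transitive (sub_open (fuzzy d) (d_S d)) (zadeh f) A;
       A_transitive (sub_open (fuzzy d) (d_E d)) (zadeh f) A].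
Proof.
move=> FA dm fc.
have h01 := i_to_ii d dm f fc A FA.
have h10 := ii_to_i d dm f fc A FA.
have h2i := ii_to_iii d dm f A FA.
have h2o := iii_to_i d dm f fc A FA.
have h3i := ii_to_F d dm f A (d_inf d) FA (fun u rho N s c z _ => EST_inf d dm u rho N s c z).
have h3o := F_to_i d dm f fc A (d_inf d) FA (LB_inf d dm).
have h4i := ii_to_F d dm f A (d_0 d) FA (fun u rho N s c z _ => EST_0 d dm u rho N s c z).
have h4o := F_to_i d dm f fc A (d_0 d) FA (LB_0 d dm).
have h5i := ii_to_F d dm f A (d_S d) FA (EST_S d dm).
have h5o := F_to_i d dm f fc A (d_S d) FA (LB_S d dm).
have h6i := ii_to_F d dm f A (d_E d) FA (EST_E d dm).
have h6o := F_to_i d dm f fc A (d_E d) FA (LB_E d dm).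
split; first exact: h01.
split; first exact: h2i.
split; first by move=> /h2o /h01 /h3i.
split; first by move=> /h3o /h01 /h4i.
split; first by move=> /h4o /h01 /h5i.
split; first by move=> /h5o /h01 /h6i.
exact: h6o.
Qed.
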